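(* Let $X=\{a_1,\dots,a_\ell\}$ be a finite set of $\ell$ distinct points, $N\ge2$, $\lambda_*\in\mathcal{P}(X)$, and let $\gamma$ be a probability measure on $X^N$. The following are equivalent: (i) $\gamma=\sum_{\nu=1}^\ell\alpha^{(\nu)}S(\delta_{T_1(a_\nu)}\otimes\cdots\otimes\delta_{T_N(a_\nu)})$ for some maps $T_1,\dots,T_N:X\to X$ and some $\alpha^{(1)},\dots,\alpha^{(\ell)}\ge0$ satisfying $\sum_{\nu=1}^\ell\lambda^{(\nu)}_i\alpha^{(\nu)}=(\lambda_* )_i$ for $i=1,\dots,\ell$, where $\lambda^{(\nu)}=\frac1N\sum_{k=1}^N\delta_{T_k(a_\nu)}$, i.e. $\lambda^{(\nu)}_i=\frac1N\#\{k:T_k(a_\nu)=a_i\}$; (ii) $\gamma=\sum_{\nu=1}^\ell\alpha^{(\nu)}\psi_N(\lambda^{(\nu)})$ for some $\lambda^{(1)},\dots,\lambda^{(\ell)}\in\mathcal{P}_{\frac1N}(X)$ and some $\alpha^{(1)},\dots,\alpha^{(\ell)}\ge0$ satisfying $\sum_{\nu=1}^\ell\lambda^{(\nu)}_i\alpha^{(\nu)}=(\lambda_* )_i$ for $i=1,\dots,\ell$. Moreover, if $\gamma$ is of form (i), then it is of form (ii) with the same $\lambda^{(\nu)}$ and $\alpha^{(\nu)}$; in particular $\gamma$ depends on $T_1,\dots,T_N$ only through the $\lambda^{(\nu)}$. Conversely, if $\gamma$ is of form (ii), then it is of form (i) with the same $\lambda^{(\nu)}$ and $\alpha^{(\nu)}$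 and with $T_1,\dots,T_N$ any maps $X\to X$ satisfying $\lambda^{(\nu)}=\frac1N\sum_{k=1}^N\delta_{T_k(a_\nu)}$ for all $\nu$.
   Context: $\mathcal{P}(X)$ denotes probability measures on $X$, identified with vectors $(\lambda_i)$, $\lambda_i=\lambda(\{a_i\})$; $\mathcal{P}_{\frac1N}(X)=\{\lambda\in\mathcal{P}(X):\lambda_i\in\frac1N\mathbb{Z}\ \forall i\}$. The symmetrization operator is $(S\gamma)(A_1\times\cdots\times A_N)=\frac1{N!}\sum_{\sigma\in S_N}\gamma(A_{\sigma(1)}\times\cdots\times A_{\sigma(N)})$. For $\lambda\in\mathcal{P}_{\frac1N}(X)$, $\psi_N(\lambda)=S(\delta_{a_{i_1}}\otimes\cdots\otimes\delta_{a_{i_N}})$ where $i_1\le\dots\le i_N$ is the nondecreasing index sequence in which each $i$ appears exactly $N\lambda_i$ times. *)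

(* Defs.v *)
From HB Require Import structures.
From mathcomp Require Import all_boot all_order all_fingroup all_algebra.
From mathcomp Require Import reals.
Set Implicit Arguments. Unset Strict Implicit. Unset Printing Implicit Defensive.
Import Order.TTheory GRing.Theory Num.Theory.
Local Open Scope ring_scope.

(* X = {a_1,...,a_l} is modelled by the index type 'I_l (a_i <-> i).
   A point of X^N is a finite function 'I_N -> 'I_l.
   Measures on the finite sets X and X^N are identified with their
   point-mass vectors (functions to R). *)

Definition config (N l : nat) := {ffun 'I_N -> 'I_l}.

Definition is_prob {R : realType} (T : finType) (mu : T -> R) : Prop :=
  (forall x, 0 <= mu x) /\ \sum_(x : T) mu x = 1.

Definition in_P1N {R : realType} (N l : nat) (lam : 'I_l -> R) : Prop :=
  is_prob lam /\ forall i, exists m : nat, lam i = m%:R / N%:R.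

(* delta_{a_{s_1}} (x) ... (x) delta_{a_{s_N}} as point masses on X^N *)
Definition dirac_seq {R : realType} (N l : nat) (s : seq 'I_l)
  (y : config N l) : R :=
  ([seq y k | k <- enum 'I_N] == s)%:R.

(* symmetrization operator S, evaluated on singletons
   {y} = {y_1} x ... x {y_N}: (S g)(y) = 1/N! sum_sigma g(y_{sigma(1)},...,y_{sigma(N)}) *)
Definition symm {R : realType} (N l : nat) (g : config N l -> R)
  (y : config N l) : R :=
  ((N`!)%:R)^-1 * \sum_(s : 'S_N) g [ffun k => y (s k)].

(* the nondecreasing index sequence in which each i appears N*lam_i times *)
Definition psi_seq {R : realType} (N l : nat) (lam : 'I_l -> R) : seq 'I_l :=
  flatten [seq nseq (Num.truncn (N%:R * lam i)) i | i <- enum 'I_l].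

Definition psiN {R : realType} (N l : nat) (lam : 'I_l -> R) : config N l -> R :=
  symm (dirac_seq (psi_seq N lam)).

Definition empirical {R : realType} (N l : nat) (T : 'I_N -> 'I_l -> 'I_l)
  (nu : 'I_l) (i : 'I_l) : R :=
  (N%:R)^-1 * #|[set k : 'I_N | T k nu == i]|%:R.

Definition mass_constraint {R : realType} (l : nat)
  (lams : 'I_l -> 'I_l -> R) (alpha : 'I_l -> R) (lamstar : 'I_l -> R) : Prop :=
  (forall nu, 0 <= alpha nu) /\
  forall i, \sum_(nu < l) lams nu i * alpha nu = lamstar i.

Definition formI {R : realType} (N l : nat) (T : 'I_N -> 'I_l -> 'I_l)
  (alpha : 'I_l -> R) : config N l -> R :=
  fun y => \sum_(nu < l) alpha nu * symm (dirac_seq [seq T k nu | k <- enum 'I_N]) y.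

Definition formII {R : realType} (N l : nat) (lams : 'I_l -> 'I_l -> R)
  (alpha : 'I_l -> R) : config N l -> R :=
  fun y => \sum_(nu < l) alpha nu * psiN (lams nu) y.

(* Main.v *)
Require Import Defs.
Set Warnings "-notation-overridden,-ambiguous-paths".
From HB Require Import structures.
From mathcomp Require Import all_boot all_order all_fingroup all_algebra.
From mathcomp Require Import reals.
Import Order.TTheory GRing.Theory Num.Theory.
Local Open Scope ring_scope.

Lemma map_enum_eq (T : finType) (U : eqType) (f g : T -> U) :
  (map f (enum T) == map g (enum T)) = [forall k, f k == g k].
Proof.
apply/eqP/forallP => [/eq_in_map H k|H]; first by apply/eqP; apply: H; rewrite mem_enum.
by apply/eq_in_map => k _; apply/eqP.
Qed.

Lemma symm_perm (R : realType) (N l : nat) (s t : seq 'I_l) (y : config N l) :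
  size s = N -> perm_eq s t ->
  symm (R:=R) (dirac_seq s) y = symm (dirac_seq t) y.
Proof.
move=> hs; rewrite perm_sym.
have ts : size s == N by apply/eqP.
move/(tuple_permP (t:=Tuple ts)) => [p ->].
rewrite /symm; congr (_ * _).
rewrite (reindex_inj (mulgI p^-1%g)); apply: eq_bigr => σ _.
rewrite /dirac_seq; congr (_%:R).
rewrite -{1}[s]/(tval (Tuple ts)) -map_tnth_enum.
have -> : ([tuple tnth (Tuple ts) (p i) | i < N] : seq _) =
  [seq tnth (Tuple ts) (p i) | i <- enum 'I_N] by rewrite -val_ord_tuple.
rewrite !map_enum_eq.
apply: congr1; apply/idP/idP => /forallP H; apply/forallP => j; rewrite ffunE.
  by have := H (p j); rewrite ffunE permM permK.
by have := H (p^-1%g j); rewrite ffunE permM /= permKV.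
Qed.

Lemma count_psi (R : realType) (N l : nat) (lam : 'I_l -> R) (i : 'I_l) :
  count_mem i (psi_seq N lam) = Num.truncn (N%:R * lam i).
Proof.
rewrite /psi_seq count_flatten -map_comp sumnE big_map.
rewrite (bigD1_seq i) ?mem_enum ?enum_uniq //= count_nseq /= eqxx mul1n.
rewrite big1_seq ?addn0 // => j /andP [hj _] /=.
by rewrite count_nseq /= (negbTE hj).
Qed.

Lemma count_map_T (N l : nat) (T : 'I_N -> 'I_l -> 'I_l) nu i :
  count_mem i [seq T k nu | k <- enum 'I_N] = #|[set k | T k nu == i]|.
Proof.
rewrite count_map enumT cardsE cardE /enum_mem size_filter.
by apply: eq_count => k.
Qed.

Lemma sum_count (l : nat) (s : seq 'I_l) : (\sum_(i < l) count_mem i s)%N = size s.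
Proof.
elim: s => [|x s IH] /=; first by rewrite big1.
rewrite big_split /= IH (bigD1 x) //= eqxx big1 // => j.
by rewrite eq_sym => /negbTE ->.
Qed.

Lemma psi_emp (R : realType) (N l : nat) (T : 'I_N -> 'I_l -> 'I_l) nu (y : config N l) :
  (0 < N)%N ->
  psiN (empirical (R:=R) T nu) y = symm (dirac_seq [seq T k nu | k <- enum 'I_N]) y.
Proof.
move=> N0; rewrite /psiN; symmetry; apply: symm_perm.
  by rewrite size_map size_enum_ord.
apply/allP => x _; apply/eqP.
rewrite count_psi count_map_T /empirical mulrA mulfV ?mul1r ?natrK //.
by rewrite pnatr_eq0 -lt0n.
Qed.

Lemma emp_P1N (R : realType) (N l : nat) (T : 'I_N -> 'I_l -> 'I_l) nu :
  (0 < N)%N -> in_P1N N (empirical (R:=R) T nu).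
Proof.
move=> N0; split; [split|].
- by move=> i; rewrite /empirical mulr_ge0 // invr_ge0 ler0n.
- rewrite /empirical -mulr_sumr -natr_sum.
  rewrite (eq_bigr (fun i => count_mem i [seq T k nu | k <- enum 'I_N])); last first.
    by move=> i _; rewrite count_map_T.
  by rewrite sum_count size_map size_enum_ord mulVf // pnatr_eq0 -lt0n.
- by move=> i; exists #|[set k | T k nu == i]|; rewrite mulrC.
Qed.

Lemma II_to_I (R : realType) (N l : nat) (lams : 'I_l -> 'I_l -> R) alpha
  (T : 'I_N -> 'I_l -> 'I_l) :
  (0 < N)%N -> (forall nu, lams nu =1 empirical T nu) ->
  formII lams alpha =1 formI T alpha.
Proof.
move=> N0 hT y; rewrite /formII /formI; apply: eq_bigr => nu _; congr (_ * _).
rewrite -psi_emp // /psiN.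
have -> : psi_seq N (lams nu) = psi_seq N (empirical (R:=R) T nu) => //.
by rewrite /psi_seq; congr flatten; apply: eq_map => i; rewrite hT.
Qed.

Lemma trunc_lam (R : realType) (N l : nat) (lam : 'I_l -> R) :
  in_P1N N lam -> (0 < N)%N ->
  forall i, (Num.truncn (N%:R * lam i))%:R = N%:R * lam i.
Proof.
move=> [_ h] N0 i; have [m ->] := h i.
by rewrite mulrC divfK ?natrK // pnatr_eq0 -lt0n.
Qed.

Lemma exists_T (R : realType) (N l : nat) (lams : 'I_l -> 'I_l -> R) :
  (forall nu, in_P1N N (lams nu)) -> (0 < N)%N ->
  exists T : 'I_N -> 'I_l -> 'I_l, forall nu, lams nu =1 empirical T nu.
Proof.
move=> hP N0.
exists (fun k nu => nth nu (psi_seq N (lams nu)) k) => nu i.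
set s := psi_seq N (lams nu).
have NR : (N%:R : R) != 0 by rewrite pnatr_eq0 -lt0n.
have hs : size s = N.
  apply/eqP; rewrite -(eqr_nat R) -sum_count natr_sum.
  rewrite (eq_bigr (fun i => N%:R * lams nu i)); last first.
    by move=> j _; rewrite count_psi trunc_lam.
  by rewrite -mulr_sumr (proj2 (proj1 (hP nu))) mulr1.
have seqT : [seq nth nu s k | k : 'I_N <- enum 'I_N] = s.
  rewrite (_ : [seq nth nu s k | k : 'I_N <- enum 'I_N] = map (nth nu s) (map val (enum 'I_N))); last by rewrite -map_comp.
  rewrite val_enum_ord -hs.
  exact: mkseq_nth.
rewrite /empirical -(@count_map_T N l (fun k nu => nth nu (psi_seq N (lams nu)) k) nu i) -/s seqT count_psi trunc_lam //.
by rewrite mulKf.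
Qed.
Theorem proposition5p2 (R : realType) (l N : nat) (lamstar : 'I_l -> R)
  (gamma : config N l -> R) :
  (2 <= N)%N -> is_prob lamstar -> is_prob gamma ->
  (* (i) <-> (ii) *)
  ((exists (T : 'I_N -> 'I_l -> 'I_l) (alpha : 'I_l -> R),
      mass_constraint (empirical T) alpha lamstar /\ gamma =1 formI T alpha)
   <->
   (exists (lams : 'I_l -> 'I_l -> R) (alpha : 'I_l -> R),
      (forall nu, in_P1N N (lams nu)) /\
      mass_constraint lams alpha lamstar /\ gamma =1 formII lams alpha))
  /\
  (* form (i) gives form (ii) with the same lambda^(nu), alpha^(nu) *)
  (forall (T : 'I_N -> 'I_l -> 'I_l) (alpha : 'I_l -> R),
      mass_constraint (empirical T) alpha lamstar -> gamma =1 formI T alpha ->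
      (forall nu, in_P1N N (empirical (R:=R) T nu)) /\
      gamma =1 formII (empirical T) alpha)
  /\
  (* form (ii) gives form (i) for any T realizing the lambda^(nu) *)
  (forall (lams : 'I_l -> 'I_l -> R) (alpha : 'I_l -> R),
      (forall nu, in_P1N N (lams nu)) ->
      mass_constraint lams alpha lamstar -> gamma =1 formII lams alpha ->
      forall T : 'I_N -> 'I_l -> 'I_l,
        (forall nu, lams nu =1 empirical T nu) ->
        gamma =1 formI T alpha).
Proof.
move=> N2 _ _.
have N0 : (0 < N)%N by apply: leq_trans N2.
have P2 : forall (T : 'I_N -> 'I_l -> 'I_l) (alpha : 'I_l -> R),
    mass_constraint (empirical T) alpha lamstar -> gamma =1 formI T alpha ->
    (forall nu, in_P1N N (empirical (R:=R) T nu)) /\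
    gamma =1 formII (empirical T) alpha.
  move=> T alpha _ hg; split; first by move=> nu; exact: emp_P1N.
  by move=> y; rewrite hg; symmetry; exact: II_to_I.
have P3 : forall (lams : 'I_l -> 'I_l -> R) (alpha : 'I_l -> R),
    (forall nu, in_P1N N (lams nu)) ->
    mass_constraint lams alpha lamstar -> gamma =1 formII lams alpha ->
    forall T : 'I_N -> 'I_l -> 'I_l,
      (forall nu, lams nu =1 empirical T nu) ->
      gamma =1 formI T alpha.
  by move=> lams alpha _ _ hg T hT y; rewrite hg; exact: II_to_I.
split; last by split.
split.
  move=> [T [alpha [hm hg]]]; exists (empirical T), alpha.
  by have [h1 h2] := P2 T alpha hm hg.
move=> [lams [alpha [hP [[ha hs] hg]]]].
have [T hT] := @exists_T R N l lams hP N0.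
exists T, alpha; split.
  split => // i; rewrite -hs; apply: eq_bigr => nu _; by rewrite hT.
exact: P3 hT.
Qed.
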